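(* In the MDC-ADMM algorithm, the objective $S(\boldsymbol{\mu},\boldsymbol{\theta})$ converges in a finite number of steps; that is, there is an $m^*<\infty$ with $$S\left(\boldsymbol{\mu}^{(m)},\boldsymbol{\theta}^{(m)}\right)=S\left(\boldsymbol{\mu}^{(m^* )},\boldsymbol{\theta}^{(m^* )}\right)\quad\text{for all } m \ge m^*.$$ Moreover, $\left(\boldsymbol{\mu}^{(m^* )},\boldsymbol{\theta}^{(m^* )}\right)$ is a KKT point of the constrained problem of minimizing $S(\boldsymbol{\mu},\boldsymbol{\theta})$ subject to $\boldsymbol{\theta}_{ij}=\boldsymbol{\mu}_i-\boldsymbol{\mu}_j$, $1\le i<j\le n$.
   Context: Given observations $\mathbf{x}_1,\dots,\mathbf{x}_n\in\mathbb{R}^p$, with centroids $\boldsymbol{\mu}_i\in\mathbb{R}^p$, consider the problem $$\min_{\boldsymbol{\mu},\boldsymbol{\theta}} S(\boldsymbol{\mu},\boldsymbol{\theta})=\frac12\sum_{i=1}^n\|\mathbf{x}_i-\boldsymbol{\mu}_i\|_2^2+\lambda_1\sum_{i=1}^n\|\boldsymbol{\mu}_i\|_1+\lambda_2\sum_{i<j}\mathrm{TLP}(\|\boldsymbol{\theta}_{ij}\|_2;\tau)\quad\text{s.t. }\boldsymbol{\theta}_{ij}=\boldsymbol{\mu}_i-\boldsymbol{\mu}_j,\ 1\le i<j\le n,$$ where $\mathrm{TLP}(a,b)=\min(|a|,b)$ and $\lambda_1,\lambda_2,\tau>0$. Write $S=S_1-S_2$ with $S_1(\boldsymbol{\mu},\boldsymbol{\theta})=\frac12\sum_i\|\mathbf{x}_i-\boldsymbol{\mu}_i\|_2^2+\lambda_1\sum_i\|\boldsymbol{\mu}_i\|_1+\lambda_2\sum_{i<j}\|\boldsymbol{\theta}_{ij}\|_2$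 and $S_2(\boldsymbol{\theta})=\lambda_2\sum_{i<j}(\|\boldsymbol{\theta}_{ij}\|_2-\tau)_+$, both convex. MDC-ADMM (a difference-of-convex algorithm combined with ADMM) is: initialize $\hat{\boldsymbol{\mu}}_i^{(0)}=\mathbf{x}_i$, $\hat{\boldsymbol{\theta}}_{ij}^{(0)}=\mathbf{x}_i-\mathbf{x}_j$, dual variables $\hat{\mathbf{v}}_{ij}^{(0)}=\mathbf{0}$; at outer step $m$ replace $S$ by the convex upper approximation $$S^{(m+1)}(\boldsymbol{\mu},\boldsymbol{\theta})=\frac12\sum_i\|\mathbf{x}_i-\boldsymbol{\mu}_i\|_2^2+\lambda_1\sum_i\|\boldsymbol{\mu}_i\|_1+\lambda_2\sum_{i<j}\|\boldsymbol{\theta}_{ij}\|_2 I(\|\hat{\boldsymbol{\theta}}^{(m)}_{ij}\|_2<\tau)+\lambda_2\tau\sum_{i<j}I(\|\hat{\boldsymbol{\theta}}^{(m)}_{ij}\|_2\ge\tau),$$ minimize it subject to $\boldsymbol{\theta}_{ij}=\boldsymbol{\mu}_i-\boldsymbol{\mu}_j$ by ADMM (scaled augmented Lagrangian with penalty parameter $\rho>0$; $\boldsymbol{\mu}_i$-updates are LASSO problems solved by cyclic coordinate descent, $\boldsymbol{\theta}_{ij}$-updates by group soft-thresholding, and $\mathbf{v}_{ij}\leftarrow\mathbf{v}_{ij}+\boldsymbol{\theta}_{ij}-(\boldsymbol{\mu}_i-\boldsymbol{\mu}_j)$), run ADMM to convergence to get $(\hat{\boldsymbol{\mu}}^{(m+1)},\hat{\boldsymbol{\theta}}^{(m+1)})$,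 and repeat while $S$ strictly decreases. *)

(* Defs.v *)
From HB Require Import structures.
From mathcomp Require Import all_boot all_order all_algebra.
From mathcomp Require Import reals.
Set Implicit Arguments. Unset Strict Implicit. Unset Printing Implicit Defensive.
Import Order.TTheory GRing.Theory Num.Theory.
Local Open Scope ring_scope.

Section Defs.
Variables (R : realType) (n p : nat).

Definition dotv (a b : 'rV[R]_p) : R := \sum_(k < p) a 0 k * b 0 k.
Definition l2norm (a : 'rV[R]_p) : R := Num.sqrt (\sum_(k < p) a 0 k ^+ 2).
Definition l1norm (a : 'rV[R]_p) : R := \sum_(k < p) `|a 0 k|.

Definition TLP (a b : R) : R := Num.min `|a| b.

(* centroids mu : 'I_n -> R^p ; theta i j used only for i < j *)
Definition objS (x : 'I_n -> 'rV[R]_p) (lam1 lam2 tau : R)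
  (mu : 'I_n -> 'rV[R]_p) (th : 'I_n -> 'I_n -> 'rV[R]_p) : R :=
  2^-1 * (\sum_(i < n) l2norm (x i - mu i) ^+ 2)
  + lam1 * (\sum_(i < n) l1norm (mu i))
  + lam2 * (\sum_(i < n) \sum_(j < n | (i < j)%N) TLP (l2norm (th i j)) tau).

(* convex surrogate S^(m+1), built from the previous iterate thm = theta^(m) *)
Definition surrS (x : 'I_n -> 'rV[R]_p) (lam1 lam2 tau : R)
  (thm : 'I_n -> 'I_n -> 'rV[R]_p)
  (mu : 'I_n -> 'rV[R]_p) (th : 'I_n -> 'I_n -> 'rV[R]_p) : R :=
  2^-1 * (\sum_(i < n) l2norm (x i - mu i) ^+ 2)
  + lam1 * (\sum_(i < n) l1norm (mu i))
  + lam2 * (\sum_(i < n) \sum_(j < n | (i < j)%N)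
              (if l2norm (thm i j) < tau then l2norm (th i j) else 0))
  + lam2 * tau * (\sum_(i < n) \sum_(j < n | (i < j)%N)
              (if l2norm (thm i j) < tau then 0 else 1)).

Definition feasible (mu : 'I_n -> 'rV[R]_p) (th : 'I_n -> 'I_n -> 'rV[R]_p) : Prop :=
  forall i j : 'I_n, (i < j)%N -> th i j = mu i - mu j.

Definition is_subgrad (f : 'rV[R]_p -> R) (a g : 'rV[R]_p) : Prop :=
  forall b, f a + dotv g (b - a) <= f b.

(* (limiting) subdifferential of t |-> TLP(||t||_2; tau) at t:
   that of ||.||_2 if ||t|| < tau, {0} if ||t|| > tau, and the union of
   both at the kink ||t|| = tau *)
Definition tlp_subgrad (tau : R) (t h : 'rV[R]_p) : Prop :=
  (l2norm t < tau /\ is_subgrad l2norm t h)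
  \/ (tau < l2norm t /\ h = 0)
  \/ (l2norm t = tau /\ (h = 0 \/ is_subgrad l2norm t h)).

(* KKT point of  min S(mu, theta)  s.t.  theta_ij = mu_i - mu_j (i < j),
   Lagrangian  S + sum_{i<j} <v_ij, theta_ij - (mu_i - mu_j)>. *)
Definition KKT_point (x : 'I_n -> 'rV[R]_p) (lam1 lam2 tau : R)
  (mu : 'I_n -> 'rV[R]_p) (th : 'I_n -> 'I_n -> 'rV[R]_p) : Prop :=
  feasible mu th /\
  exists v : 'I_n -> 'I_n -> 'rV[R]_p,
    (forall i : 'I_n, exists g, is_subgrad l1norm (mu i) g /\
        (mu i - x i) + lam1 *: g
        - (\sum_(j < n | (i < j)%N) v i j) + (\sum_(j < n | (j < i)%N) v j i) = 0)
    /\ (forall i j : 'I_n, (i < j)%N ->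
        exists h, tlp_subgrad tau (th i j) h /\ lam2 *: h + v i j = 0).

End Defs.

(* Main.v *)
Require Import Defs.
From HB Require Import structures.
From mathcomp Require Import all_boot all_order all_algebra.
From mathcomp Require Import reals.
From mathcomp Require classical_sets.
From mathcomp Require Import ring lra.
From Stdlib Require Import Classical.
Import Order.TTheory GRing.Theory Num.Theory.
Set Implicit Arguments. Unset Strict Implicit. Unset Printing Implicit Defensive.
Local Open Scope ring_scope.

Section HBsec.
Variables (R : realType) (I : finType).
Notation F := {ffun I -> R^o}.

Definition sublin (P : F -> R) :=
  (forall w1 w2, P (w1 + w2) <= P w1 + P w2) /\
  (forall (s : R) (w : F), 0 < s -> P (s *: w) <= s * P w).

Lemma sublin0 P : sublin P -> P 0 = 0.
Proof.
move=> [HA HS].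
have h1 := HS 2 0 (ltr0Sn _ 1); rewrite scaler0 in h1.
have h2 : P 0 <= 2^-1 * P 0.
  by have := HS 2^-1 0; rewrite scaler0; apply; rewrite invr_gt0.
lra.
Qed.

Lemma sublinN P w : sublin P -> - P (- w) <= P w.
Proof.
move=> [HA HS] ; have := HA w (- w); rewrite subrr (sublin0 (conj HA HS)); lra.
Qed.

Lemma sublinZ P s w : sublin P -> 0 < s -> P (s *: w) = s * P w.
Proof.
move=> [HA HS] s0; apply/eqP; rewrite eq_le HS //=.
have := HS s^-1 (s *: w); rewrite invr_gt0 scalerA mulVf ?gt_eqF // scale1r => /(_ s0) h.
by rewrite ler_pdivlMl in h.
Qed.

Section Proj.
Variables (U : lmodType R) (P : F -> R) (T : U -> F) (l : U -> R).
Hypotheses (sP : sublin P) (HT : forall a b, T (a + b) = T a + T b)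
  (HTs : forall (s : R) a, T (s *: a) = s *: T a)
  (Hl : forall a b, l (a + b) = l a + l b)
  (Hls : forall (s : R) a, l (s *: a) = s * l a)
  (Hdom : forall d, l d <= P (T d)).

Lemma l0 : l 0 = 0.
Proof. by rewrite -(scale0r (0:U)) Hls mul0r. Qed.
Lemma T0 : T 0 = 0.
Proof. by rewrite -(scale0r (0:U)) HTs scale0r. Qed.
Definition projE w : classical_sets.set R := fun y => exists d, y = P (w + T d) - l d.
Definition Qf w := inf (projE w).

Lemma projE_lb w : classical_sets.lbound (projE w) (- P (- w)).
Proof.
move=> y [d ->].
have := sP.1 (w + T d) (- w); rewrite addrC addKr => h.
have := Hdom d; lra.
Qed.

Lemma projE_ne w : projE w (P w - l 0).
Proof. by exists 0; rewrite T0 addr0. Qed.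

Lemma Qf_le w d : Qf w <= P (w + T d) - l d.
Proof. by apply: ge_inf; [exists (- P (- w)); apply: projE_lb | exists d]. Qed.

Lemma Qf_glb w z : (forall d, z <= P (w + T d) - l d) -> z <= Qf w.
Proof. by move=> h; apply: lb_le_inf; [exists (P w - l 0); apply: projE_ne| move=> y [d ->]]. Qed.

Lemma Qf_leP w : Qf w <= P w.
Proof. by have := Qf_le w 0; rewrite T0 l0 addr0 subr0. Qed.

Lemma Qf_geN w : - P (- w) <= Qf w.
Proof. by apply: Qf_glb => d; apply: projE_lb; exists d. Qed.

Lemma Qf_T d : Qf (T d) <= l d.
Proof.
have := Qf_le (T d) (- d).
rewrite -scaleN1r HTs Hls scaleN1r subrr (sublin0 sP); lra.
Qed.

Lemma Qf_sublin : sublin Qf.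
Proof.
split.
- move=> w1 w2.
  suff h : forall d1 d2, Qf (w1 + w2) <= (P (w1 + T d1) - l d1) + (P (w2 + T d2) - l d2).
    have h2 : forall d2, Qf (w1 + w2) - (P (w2 + T d2) - l d2) <= Qf w1.
      by move=> d2; apply: Qf_glb => d1; have := h d1 d2; lra.
    have h3 : Qf (w1 + w2) - Qf w1 <= Qf w2.
      by apply: Qf_glb => d2; have := h2 d2; lra.
    lra.
  move=> d1 d2.
  have := Qf_le (w1 + w2) (d1 + d2); rewrite HT Hl.
  have := sP.1 (w1 + T d1) (w2 + T d2).
  have -> : w1 + T d1 + (w2 + T d2) = w1 + w2 + (T d1 + T d2).
    by rewrite addrACA.
  lra.
- move=> s w s0.
  have h : forall d, Qf (s *: w) / s <= P (w + T d) - l d.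
    move=> d; have := Qf_le (s *: w) (s *: d).
    rewrite HTs Hls -scalerDr (sublinZ _ sP s0) => h.
    rewrite ler_pdivrMr // mulrC mulrBr; lra.
  by have := @Qf_glb w _ h; rewrite ler_pdivrMr // mulrC.
Qed.

Lemma Qf_Teq (c : F -> R) :
  (forall a b, c (a + b) = c a + c b) -> (forall s a, c (s *: a) = s * c a) ->
  (forall w, c w <= Qf w) -> forall d, c (T d) = l d.
Proof.
move=> cA cS cQ d; apply/eqP; rewrite eq_le.
have -> /= : c (T d) <= l d by apply: le_trans (cQ _) (Qf_T d).
have := le_trans (cQ _) (Qf_T (- d)).
by rewrite -scaleN1r HTs Hls cS; lra.
Qed.
End Proj.
End HBsec.

Section HBset.
Variables (R : realType) (I : finType).
Notation F := {ffun I -> R^o}.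

Lemma HB_aux N : forall (S : {set I}) (P : F -> R), #|S| = N -> sublin P ->
  exists c : I -> R, forall w : F, (forall i, i \notin S -> w i = 0) ->
    \sum_(i in S) c i * w i <= P w.
Proof.
elim: N => [|N IH] S P hS sP.
  exists (fun _ => 0) => w hw.
  have -> : w = 0 by apply/ffunP => i; rewrite ffunE hw // (card0_eq hS).
  by rewrite (sublin0 sP) big1 // => i _; rewrite mul0r.
have [x xS] : exists x, x \in S.
  by apply/set0Pn; rewrite -card_gt0 hS.
set d := [ffun i => ((i == x)%:R : R)] : F.
set c0 := P d.
have HT : forall a b : R^o, (a + b) *: d = a *: d + b *: d by move=> a b; rewrite scalerDl.
have HTs : forall (s : R) (a : R^o), (s *: a) *: d = s *: (a *: d).
  by move=> s a; rewrite scalerA.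
have Hl : forall a b : R^o, c0 * (a + b) = c0 * a + c0 * b by move=> a b; rewrite mulrDr.
have Hls : forall (s : R) (a : R^o), c0 * (s *: a) = s * (c0 * a).
  by move=> s a; rewrite /GRing.scale /= mulrCA.
have Hdom : forall r : R^o, c0 * r <= P (r *: d).
  move=> r; case: (ltrgtP r 0) => hr.
  - have -> : r *: d = (- r) *: (- d) by rewrite scaleNr scalerN opprK.
    rewrite (sublinZ _ sP) ?oppr_gt0 //.
    have := sublinN (- d) sP; rewrite opprK /c0 => h.
    by rewrite mulrC -[X in X <= _]opprK -mulrN -mulNr ler_pM2l ?oppr_gt0.
  - by rewrite (sublinZ _ sP) // mulrC.
  - by rewrite hr mulr0 scale0r (sublin0 sP).
have sQ := Qf_sublin sP HT HTs Hl Hls Hdom.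
have hS' : #|S :\ x| = N by move: hS; rewrite (cardsD1 x) xS add1n => -[].
have [c' Hc'] := IH _ _ hS' sQ.
exists (fun i => if i == x then c0 else c' i) => w hw.
rewrite (big_setD1 x xS) /= eqxx.
set w' := w - (w x) *: d.
have hw' : forall i, i \notin S :\ x -> w' i = 0.
  move=> i; rewrite in_setD1 negb_and negbK /w' !ffunE => /orP[/eqP ->|hi].
    by rewrite eqxx /GRing.scale /= mulr1 subrr.
  rewrite (hw i hi).
  have -> : (i == x) = false by apply/negbTE; apply: contraNneq hi => ->.
  by rewrite mulr0n scaler0 subr0.
have := Hc' _ hw'.
have -> : \sum_(i in S :\ x) c' i * w' i =
          \sum_(i in S :\ x) (if i == x then c0 else c' i) * w i.
  apply: eq_bigr => i; rewrite in_setD1 => /andP[/negbTE hix _].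
  by rewrite hix /w' !ffunE hix /GRing.scale /= mulr0 subr0.
have := Qf_le sP Hdom w' (w x).
have -> : w' + (w x) *: d = w by rewrite /w' subrK.
lra.
Qed.

Lemma HB_full (P : F -> R) : sublin P ->
  exists c : I -> R, forall w : F, \sum_i c i * w i <= P w.
Proof.
move=> sP; have [c Hc] := HB_aux (erefl #|[set: I]|) sP.
exists c => w.
have h : \sum_(i in [set: I]) c i * w i <= P w by apply: Hc => i; rewrite in_setT.
by move: h; rewrite (eq_bigl xpredT) // => i; rewrite in_setT.
Qed.

Lemma HB_ext (U : lmodType R) (P : F -> R) (T : U -> F) (l : U -> R) :
  sublin P -> (forall a b, T (a + b) = T a + T b) ->
  (forall (s : R) a, T (s *: a) = s *: T a) ->
  (forall a b, l (a + b) = l a + l b) ->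
  (forall (s : R) a, l (s *: a) = s * l a) ->
  (forall d, l d <= P (T d)) ->
  exists c : I -> R, (forall w : F, \sum_i c i * w i <= P w) /\
     (forall d, \sum_i c i * T d i = l d).
Proof.
move=> sP HT HTs Hl Hls Hdom.
have [c Hc] := HB_full (Qf_sublin sP HT HTs Hl Hls Hdom).
exists c; split.
  by move=> w; apply: le_trans (Hc w) (Qf_leP sP HTs Hls Hdom w).
move=> d.
apply: (@Qf_Teq _ _ _ P T l sP HTs Hls Hdom (fun w => \sum_i c i * w i)) => //.
- by move=> a b; rewrite -big_split; apply: eq_bigr => i _; rewrite ffunE mulrDr.
- move=> s a; rewrite mulr_sumr; apply: eq_bigr => i _.
  by rewrite ffunE /GRing.scale /= mulrCA.
Qed.
End HBset.

Section Norms.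
Variables (R : realType) (p : nat).
Implicit Types a b : 'rV[R]_p.

Lemma sumsq_ge0 a : 0 <= \sum_(k < p) a 0 k ^+ 2.
Proof. by apply: sumr_ge0 => k _; apply: sqr_ge0. Qed.

Lemma l2norm_ge0 a : 0 <= l2norm a.
Proof. exact: sqrtr_ge0. Qed.

Lemma l2norm_sq a : l2norm a ^+ 2 = \sum_(k < p) a 0 k ^+ 2.
Proof. by rewrite /l2norm sqr_sqrtr // sumsq_ge0. Qed.

Lemma dotv_self a : dotv a a = l2norm a ^+ 2.
Proof. by rewrite l2norm_sq; apply: eq_bigr => k _; rewrite expr2. Qed.

Lemma dotvC a b : dotv a b = dotv b a.
Proof. by apply: eq_bigr => k _; rewrite mulrC. Qed.

Lemma dotvDr a b c : dotv a (b + c) = dotv a b + dotv a c.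
Proof. by rewrite /dotv -big_split; apply: eq_bigr => k _; rewrite mxE mulrDr. Qed.

Lemma dotvZr a b (s : R) : dotv a (s *: b) = s * dotv a b.
Proof. by rewrite /dotv mulr_sumr; apply: eq_bigr => k _; rewrite mxE mulrCA. Qed.

Lemma dotvNr a b : dotv a (- b) = - dotv a b.
Proof. by rewrite -scaleN1r dotvZr mulN1r. Qed.

Lemma dotv0r a : dotv a 0 = 0.
Proof. by rewrite /dotv big1 // => k _; rewrite mxE mulr0. Qed.

Lemma l2norm0 : l2norm (0 : 'rV[R]_p) = 0.
Proof. by rewrite /l2norm big1 ?sqrtr0 // => k _; rewrite mxE expr0n. Qed.

Lemma l2norm_eq0 a : (l2norm a == 0) = (a == 0).
Proof.
apply/idP/idP; last by move/eqP ->; rewrite l2norm0.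
rewrite /l2norm sqrtr_eq0 => h.
have h0 : \sum_(k < p) a 0 k ^+ 2 = 0.
  by apply/eqP; rewrite eq_le h sumsq_ge0.
apply/eqP/rowP => k; rewrite mxE.
have := @psumr_eq0P _ _ xpredT (fun k => a 0 k ^+ 2) (fun k _ => sqr_ge0 (a 0 k)) h0 k isT.
by move/eqP; rewrite sqrf_eq0 => /eqP.
Qed.

Lemma l2norm_gt0 a : a != 0 -> 0 < l2norm a.
Proof. by move=> h; rewrite lt_def l2norm_eq0 h l2norm_ge0. Qed.

Lemma CS a b : dotv a b <= l2norm a * l2norm b.
Proof.
set A := \sum_(k < p) a 0 k ^+ 2; set C := \sum_(k < p) b 0 k ^+ 2.
set B := dotv a b.
suff hB : B ^+ 2 <= A * C.
  have h1 : B <= `|B| by apply: ler_norm.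
  apply: le_trans h1 _; rewrite /l2norm -sqrtrM ?sumsq_ge0 // -sqrtr_sqr.
  by apply: ler_wsqrtr.
have hA : 0 <= A by apply: sumsq_ge0.
case: (ltrgtP A 0) => [|hA0|hA0]; first by rewrite ltNge hA.
  have e : 0 <= \sum_(k < p) (A * b 0 k - B * a 0 k) ^+ 2.
    by apply: sumr_ge0 => k _; apply: sqr_ge0.
  have ee : \sum_(k < p) (A * b 0 k - B * a 0 k) ^+ 2 = A * (A * C - B ^+ 2).
    have -> : A * (A * C - B ^+ 2) = A ^+ 2 * C - 2 * A * B * B + B ^+ 2 * A by ring.
    rewrite (eq_bigr (fun k => A^+2 * b 0 k ^+2 - (2*A*B) * (a 0 k * b 0 k) + B^+2 * a 0 k ^+ 2)); last by move=> k _; ring.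
    rewrite big_split sumrB /= -!mulr_sumr -/A -/C.
    by rewrite /B /dotv.
  rewrite ee (pmulr_rge0 _ hA0) in e; lra.
have a0 : a = 0.
  by apply/eqP; rewrite -l2norm_eq0 /l2norm -/A hA0 sqrtr0.
have B0 : B = 0 by rewrite /B a0 dotvC /dotv big1 // => k _; rewrite mxE mulr0.
by rewrite B0 hA0 mul0r expr2 mulr0.
Qed.

Lemma l2norm_sqD a b : l2norm (a + b) ^+ 2 = l2norm a ^+ 2 + 2 * dotv a b + l2norm b ^+ 2.
Proof.
rewrite !l2norm_sq /dotv mulr_sumr -!big_split /=; apply: eq_bigr => k _.
by rewrite mxE; ring.
Qed.

Lemma l2norm_Z (s : R) a : l2norm (s *: a) = `|s| * l2norm a.
Proof.
rewrite /l2norm -sqrtr_sqr -sqrtrM ?sqr_ge0 // mulr_sumr; congr Num.sqrt.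
by apply: eq_bigr => k _; rewrite mxE exprMn.
Qed.

Lemma l2norm_N a : l2norm (- a) = l2norm a.
Proof. by rewrite -scaleN1r l2norm_Z normrN normr1 mul1r. Qed.

Lemma l2norm_D a b : l2norm (a + b) <= l2norm a + l2norm b.
Proof.
have h := l2norm_sqD a b; have hc := CS a b.
have h1 := l2norm_ge0 (a + b); have h2 := l2norm_ge0 a; have h3 := l2norm_ge0 b.
nra.
Qed.

Lemma l2_diff a b (t : R) : a != 0 -> 0 < t ->
  l2norm (a + t *: b) <= l2norm a + t * (dotv a b / l2norm a)
                         + t ^+ 2 * (l2norm b ^+ 2 / (2 * l2norm a)).
Proof.
move=> a0 t0; have N0 := l2norm_gt0 a0.
set N := l2norm a; set y := l2norm (a + t *: b).
have hy : y ^+ 2 = N ^+ 2 + 2 * t * dotv a b + t ^+ 2 * l2norm b ^+ 2.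
  by rewrite /y l2norm_sqD dotvZr l2norm_Z exprMn real_normK ?num_real // mulrA.
have -> : N + t * (dotv a b / N) + t ^+ 2 * (l2norm b ^+ 2 / (2 * N))
   = (N ^+ 2 + y ^+ 2) / (2 * N).
  by rewrite hy; field; rewrite gt_eqF.
rewrite ler_pdivlMr ?mulr_gt0 //.
have := sqr_ge0 (y - N); nra.
Qed.

(* the directional derivative of the l2 norm *)
Definition phi (a b : 'rV[R]_p) : R := if a == 0 then l2norm b else dotv a b / l2norm a.

Lemma phi_le a b : phi a b <= l2norm b.
Proof.
rewrite /phi; case: eqP => // /eqP a0.
by rewrite ler_pdivrMr ?l2norm_gt0 // mulrC; apply: CS.
Qed.

Lemma phi_N a : phi a (- a) = - l2norm a.
Proof.
rewrite /phi; case: eqP => [->|/eqP a0]; first by rewrite oppr0 l2norm0 oppr0.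
rewrite dotvNr dotv_self; field; exact: lt0r_neq0 (l2norm_gt0 a0).
Qed.

Lemma phiD a b c : phi a (b + c) <= phi a b + phi a c.
Proof.
rewrite /phi; case: eqP => _; first exact: l2norm_D.
by rewrite dotvDr mulrDl.
Qed.

Lemma phiZ a b (s : R) : 0 <= s -> phi a (s *: b) = s * phi a b.
Proof.
move=> s0; rewrite /phi; case: eqP => _; first by rewrite l2norm_Z ger0_norm.
by rewrite dotvZr mulrA.
Qed.

Lemma phi0 a : phi a 0 = 0.
Proof. by rewrite -(scale0r (0 : 'rV[R]_p)) phiZ // mul0r. Qed.

Lemma phi_diff a b (t : R) : 0 < t ->
  l2norm (a + t *: b) <= l2norm a + t * phi a b
       + t ^+ 2 * (if a == 0 then 0 else l2norm b ^+ 2 / (2 * l2norm a)).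
Proof.
move=> t0; rewrite /phi; case: eqP => [->|/eqP a0]; last exact: l2_diff.
by rewrite add0r l2norm0 add0r mulr0 addr0 l2norm_Z gtr0_norm.
Qed.

End Norms.

Section Psi.
Variable R : realType.
Definition psi (a b : R) : R := if a == 0 then `|b| else Num.sg a * b.

Lemma psi_le a b : psi a b <= `|b|.
Proof.
rewrite /psi; case: eqP => // _.
apply: le_trans (ler_norm _) _; rewrite normrM.
case: sgrP => _; rewrite ?normr0 ?normr1 ?normrN1 ?mul0r ?mul1r //.
Qed.

Lemma psi_N a : psi a (- a) = - `|a|.
Proof. by rewrite /psi; case: eqP => [->|_]; rewrite ?oppr0 ?normr0 ?oppr0 // mulrN -normrEsg. Qed.

Lemma psiD a b c : psi a (b + c) <= psi a b + psi a c.
Proof. by rewrite /psi; case: eqP => _; [apply: ler_normD | rewrite mulrDr]. Qed.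

Lemma psiZ a b (s : R) : 0 <= s -> psi a (s * b) = s * psi a b.
Proof. by move=> s0; rewrite /psi; case: eqP => _; [rewrite normrM ger0_norm | rewrite mulrCA]. Qed.

Lemma psi0 a : psi a 0 = 0.
Proof. by rewrite /psi; case: eqP; rewrite ?normr0 ?mulr0. Qed.

Lemma psi_diff a b (t : R) : 0 < t ->
  `|a + t * b| <= `|a| + t * psi a b
       + t ^+ 2 * (if a == 0 then 0 else 2 * b ^+ 2 / `|a|).
Proof.
move=> t0; rewrite /psi; case: eqP => [->|/eqP a0].
  rewrite normr0 mulr0 addr0 !add0r normrM gtr0_norm //.
set c := t * b.
have -> : t ^+ 2 * (2 * b ^+ 2 / `|a|) = 2 * (c ^+ 2 / `|a|) by rewrite /c; field; rewrite normr_eq0.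
have ha : 0 < `|a| by rewrite normr_gt0.
set q := c ^+ 2 / `|a|.
have hq : q * `|a| = c ^+ 2 by rewrite /q divfK // gt_eqF.
have q0 : 0 <= q by rewrite /q divr_ge0 ?sqr_ge0 // ltW.
rewrite mulrCA -/c.
case: (ltrgtP a 0) => ha0.
- rewrite ltr0_sg // ltr0_norm // in ha hq *.
  case: (lerP 0 (a + c)) => hac.
    rewrite ger0_norm //; nra.
  rewrite ltr0_norm //; nra.
- rewrite gtr0_sg // gtr0_norm // in ha hq *.
  case: (lerP 0 (a + c)) => hac.
    rewrite ger0_norm //; nra.
  rewrite ltr0_norm //; nra.
- by move: a0; rewrite ha0 eqxx.
Qed.
End Psi.


Section EvConst.
Variables (R : realType) (T : finType) (a : nat -> T) (V : nat -> R).
Hypotheses (Vdec : forall m, V m.+1 <= V m) (Va : forall m k, a m = a k -> V m = V k).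

Lemma Vmono m k : (m <= k)%N -> V k <= V m.
Proof.
move=> /subnK <-; elim: (k - m)%N => [|j IH]; first by rewrite add0n.
by rewrite addSn; apply: le_trans (Vdec _) IH.
Qed.

Lemma ev_aux N : forall (S : {set T}) m1, (#|S| <= N)%N ->
  (forall m, (m1 <= m)%N -> a m \in S) ->
  exists m0, forall m, (m0 <= m)%N -> V m = V m0.
Proof.
elim: N => [|N IH] S m1 hS hin.
  have := hin m1 (leqnn _); rewrite (card0_eq _) //; apply/eqP; rewrite -leqn0 //.
case: (classic (exists m2, (m1 <= m2)%N /\ V m2 <> V m1)) => [[m2 [h12 hne]]|hno].
  have hlt : V m2 < V m1 by rewrite lt_neqAle; apply/andP; split; [apply/eqP|apply: Vmono].
  apply: (IH (S :\ a m1) m2).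
    by move: hS; rewrite (cardsD1 (a m1)) hin ?leqnn.
  move=> m hm; rewrite in_setD1 hin ?andbT; last exact: leq_trans hm.
  apply/eqP => e; have := Va e; have := Vmono hm; lra.
exists m1 => m hm; apply: NNPP => hne; apply: hno; by exists m.
Qed.

Lemma ev_const : exists m0, forall m, (m0 <= m)%N -> V m = V m0.
Proof. by apply: (@ev_aux #|[set: T]| [set: T] 0) => // m _; rewrite in_setT. Qed.
End EvConst.

Section Surr.
Variables (R : realType) (n p : nat) (x : 'I_n -> 'rV[R]_p) (lam1 lam2 tau : R).
Hypotheses (hl2 : 0 <= lam2).

Lemma surr_split thm mu th :
  surrS x lam1 lam2 tau thm mu th =
  2^-1 * (\sum_(i < n) l2norm (x i - mu i) ^+ 2)
  + lam1 * (\sum_(i < n) l1norm (mu i))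
  + lam2 * (\sum_(i < n) \sum_(j < n | (i < j)%N)
      ((if l2norm (thm i j) < tau then l2norm (th i j) else 0)
       + tau * (if l2norm (thm i j) < tau then 0 else 1))).
Proof.
rewrite /surrS -addrA -mulrA -mulrDr; congr (_ + lam2 * _).
rewrite mulr_sumr -big_split; apply: eq_bigr => i _.
by rewrite mulr_sumr -big_split.
Qed.

Lemma surr_self mu th : surrS x lam1 lam2 tau th mu th = objS x lam1 lam2 tau mu th.
Proof.
rewrite surr_split /objS; congr (_ + lam2 * _).
apply: eq_bigr => i _; apply: eq_bigr => j _; rewrite /TLP ger0_norm ?l2norm_ge0 //.
case: ifP => h; first by rewrite mulr0 addr0 min_l // ltW.
by rewrite add0r mulr1 min_r // leNgt h.
Qed.

Lemma surr_major thm mu th : objS x lam1 lam2 tau mu th <= surrS x lam1 lam2 tau thm mu th.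
Proof.
rewrite surr_split /objS lerD2l; apply: ler_wpM2l => //.
apply: ler_sum => i _; apply: ler_sum => j _; rewrite /TLP ger0_norm ?l2norm_ge0 //.
case: ifP => h; rewrite ge_min; first by rewrite mulr0 addr0 lexx.
by rewrite add0r mulr1 lexx orbT.
Qed.

Lemma surr_dep thm1 thm2 mu th :
  (forall i j : 'I_n, (i < j)%N -> (l2norm (thm1 i j) < tau) = (l2norm (thm2 i j) < tau)) ->
  surrS x lam1 lam2 tau thm1 mu th = surrS x lam1 lam2 tau thm2 mu th.
Proof.
move=> h; rewrite !surr_split; congr (_ + lam2 * _).
by apply: eq_bigr => i _; apply: eq_bigr => j hij; rewrite h.
Qed.
End Surr.

Lemma sum3 (R : realType) (J : finType) (P : pred J) (a b c : J -> R) (t : R) :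
  \sum_(j | P j) a j + t * \sum_(j | P j) b j + t ^+ 2 * \sum_(j | P j) c j =
  \sum_(j | P j) (a j + t * b j + t ^+ 2 * c j).
Proof. by rewrite !mulr_sumr -!big_split. Qed.

Lemma sum_single (R : realType) (J : finType) (P : pred J) (j0 : J) (F : J -> R) :
  (forall j, P j -> j != j0 -> F j = 0) ->
  \sum_(j | P j) F j = if P j0 then F j0 else 0.
Proof.
move=> h; case: ifP => hj0.
  by rewrite (bigD1 j0) //= big1 ?addr0 // => j /andP[pj nj]; apply: h.
by apply: big1 => j pj; apply: h => //; apply: contraTneq pj => ->; rewrite hj0.
Qed.

Lemma sum_pairE (R : realType) (J K : finType) (G : J * K -> R) :
  \sum_q G q = \sum_j \sum_k G (j, k).
Proof. by rewrite pair_bigA; apply: eq_bigr => -[j k]. Qed.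

Lemma sum_pair_single (R : realType) (J K : finType) (F : J -> K -> R) j0 k0 :
  (forall j k, (j, k) != (j0, k0) -> F j k = 0) ->
  \sum_j \sum_k F j k = F j0 k0.
Proof.
move=> h; rewrite pair_bigA (@sum_single _ _ _ (j0, k0)) //.
by move=> [j k] _ /h.
Qed.

Lemma sum_pair_single_dep (R : realType) (J K : finType) (Q : J -> pred K)
    (F : J -> K -> R) j0 k0 :
  (forall j k, Q j k -> (j, k) != (j0, k0) -> F j k = 0) ->
  \sum_j \sum_(k | Q j k) F j k = if Q j0 k0 then F j0 k0 else 0.
Proof.
move=> h; rewrite (pair_big_dep xpredT Q) (@sum_single _ _ _ (j0, k0)) //.
by move=> [j k] /= hq /h; apply.
Qed.

Section KKT.
Variables (R : realType) (n p : nat) (x : 'I_n -> 'rV[R]_p) (lam1 lam2 tau : R).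
Hypotheses (hl1 : 0 < lam1) (hl2 : 0 < lam2).
Variables (mu : 'I_n -> 'rV[R]_p) (th : 'I_n -> 'I_n -> 'rV[R]_p).
Hypotheses (hfeas : feasible mu th)
  (hopt : forall mu' th', feasible mu' th' ->
     surrS x lam1 lam2 tau th mu th <= surrS x lam1 lam2 tau th mu' th').

Definition A (i j : 'I_n) := l2norm (th i j) < tau.

Definition pp (d : 'M[R]_(n, p)) :=
  \sum_(i < n) \sum_(k < p) (mu i 0 k - x i 0 k) * d i k
  + lam1 * \sum_(i < n) \sum_(k < p) psi (mu i 0 k) (d i k)
  + lam2 * \sum_(i < n) \sum_(j < n | (i < j)%N)
       (if A i j then phi (th i j) (row i d - row j d) else 0).

Definition CC (d : 'M[R]_(n, p)) :=
  2^-1 * \sum_(i < n) \sum_(k < p) d i k ^+ 2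
  + lam1 * \sum_(i < n) \sum_(k < p)
       (if mu i 0 k == 0 then 0 else 2 * d i k ^+ 2 / `|mu i 0 k|)
  + lam2 * \sum_(i < n) \sum_(j < n | (i < j)%N)
       (if A i j then (if th i j == 0 then 0
           else l2norm (row i d - row j d) ^+ 2 / (2 * l2norm (th i j))) else 0).

Definition mup (t : R) (d : 'M[R]_(n, p)) i := mu i + t *: row i d.
Definition thp (t : R) (d : 'M[R]_(n, p)) i j := mup t d i - mup t d j.

Lemma pert d t : 0 < t ->
  surrS x lam1 lam2 tau th (mup t d) (thp t d)
  <= surrS x lam1 lam2 tau th mu th + t * pp d + t ^+ 2 * CC d.
Proof.
move=> t0; rewrite !surr_split /pp /CC.
set Q' := \sum_(i < n) l2norm (x i - mup t d i) ^+ 2.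
set Q := \sum_(i < n) l2norm (x i - mu i) ^+ 2.
set L' := \sum_(i < n) l1norm (mup t d i).
set L := \sum_(i < n) l1norm (mu i).
set G' := \sum_(i < n) \sum_(j < n | (i < j)%N)
   ((if l2norm (th i j) < tau then l2norm (thp t d i j) else 0)
    + tau * (if l2norm (th i j) < tau then 0 else 1)).
set G := \sum_(i < n) \sum_(j < n | (i < j)%N)
   ((if l2norm (th i j) < tau then l2norm (th i j) else 0)
    + tau * (if l2norm (th i j) < tau then 0 else 1)).
set P1 := \sum_(i < n) \sum_(k < p) (mu i 0 k - x i 0 k) * d i k.
set Q2 := \sum_(i < n) \sum_(k < p) d i k ^+ 2.
set Psi := \sum_(i < n) \sum_(k < p) psi (mu i 0 k) (d i k).
set C1 := \sum_(i < n) \sum_(k < p)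
       (if mu i 0 k == 0 then 0 else 2 * d i k ^+ 2 / `|mu i 0 k|).
set Phi := \sum_(i < n) \sum_(j < n | (i < j)%N)
       (if A i j then phi (th i j) (row i d - row j d) else 0).
set C2 := \sum_(i < n) \sum_(j < n | (i < j)%N)
       (if A i j then (if th i j == 0 then 0
           else l2norm (row i d - row j d) ^+ 2 / (2 * l2norm (th i j))) else 0).
have hQ : Q' = Q + t * (2 * P1) + t ^+ 2 * Q2.
  rewrite /Q' /Q /P1 /Q2 mulr_sumr sum3; apply: eq_bigr => i _.
  rewrite !l2norm_sq mulr_sumr sum3; apply: eq_bigr => k _.
  by rewrite !mxE; ring.
have hL : L' <= L + t * Psi + t ^+ 2 * C1.
  rewrite /L' /L /Psi /C1 sum3; apply: ler_sum => i _; rewrite /l1norm sum3.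
  apply: ler_sum => k _; rewrite !mxE; exact: psi_diff.
have hG : G' <= G + t * Phi + t ^+ 2 * C2.
  rewrite /G' /G /Phi /C2 sum3; apply: ler_sum => i _; rewrite sum3; apply: ler_sum => j hij.
  rewrite /A; case: ifP => hA; last by rewrite !mulr0 !addr0.
  have -> : thp t d i j = th i j + t *: (row i d - row j d).
    by rewrite /thp /mup (hfeas hij) scalerBr opprD addrACA.
  have := phi_diff (th i j) (row i d - row j d) t0; lra.
have h1 := ler_wpM2l (ltW hl1) hL; have h2 := ler_wpM2l (ltW hl2) hG.
rewrite hQ; nra.
Qed.

Lemma pp_ge0 d : 0 <= pp d.
Proof.
have H : forall t, 0 < t -> 0 <= pp d + t * CC d.
  move=> t t0; have h1 := pert d t0.
  have h2 := hopt (fun i j _ => erefl : thp t d i j = mup t d i - mup t d j).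
  have : 0 <= t * (pp d + t * CC d) by nra.
  by rewrite pmulr_rge0.
rewrite leNgt; apply/negP => hp.
set c := CC d.
have c1 : 0 < `|c| + 1 by have := normr_ge0 c; lra.
set t := - pp d / (`|c| + 1).
have t0 : 0 < t by rewrite /t divr_gt0 // oppr_gt0.
have := H t t0; rewrite -/c.
have := ler_wpM2l (ltW t0) (ler_norm c).
have e : t * (`|c| + 1) = - pp d by rewrite /t divfK // gt_eqF.
lra.
Qed.

Notation I := (('I_n * 'I_p) + ('I_n * 'I_n * 'I_p))%type.
Notation F := {ffun I -> R^o}.

Definition blk (w : F) (i j : 'I_n) : 'rV[R]_p := \row_k w (inr (i, j, k)).

Definition Pf (w : F) : R :=
  lam1 * \sum_(i < n) \sum_(k < p) psi (mu i 0 k) (w (inl (i, k)))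
  + lam2 * \sum_(i < n) \sum_(j < n | (i < j)%N)
       (if A i j then phi (th i j) (blk w i j) else 0).

Definition Tf (d : 'M[R]_(n, p)) : F :=
  [ffun z => match z with
             | inl ik => d ik.1 ik.2
             | inr ijk => d ijk.1.1 ijk.2 - d ijk.1.2 ijk.2 end].

Definition lf (d : 'M[R]_(n, p)) : R :=
  - \sum_(i < n) \sum_(k < p) (mu i 0 k - x i 0 k) * d i k.

Lemma blkD w1 w2 i j : blk (w1 + w2) i j = blk w1 i j + blk w2 i j.
Proof. by apply/rowP => k; rewrite !mxE ffunE. Qed.

Lemma blkZ (s : R) w i j : blk (s *: w) i j = s *: blk w i j.
Proof. by apply/rowP => k; rewrite !mxE ffunE. Qed.

Lemma Pf_sublin : sublin Pf.
Proof.
split.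
- move=> w1 w2; rewrite /Pf.
  have hX : \sum_(i < n) \sum_(k < p) psi (mu i 0 k) ((w1 + w2) (inl (i, k)))
     <= \sum_(i < n) \sum_(k < p) psi (mu i 0 k) (w1 (inl (i, k)))
      + \sum_(i < n) \sum_(k < p) psi (mu i 0 k) (w2 (inl (i, k))).
    rewrite -big_split; apply: ler_sum => i _; rewrite -big_split.
    apply: ler_sum => k _; rewrite ffunE; apply: psiD.
  have hY : \sum_(i < n) \sum_(j < n | (i < j)%N)
              (if A i j then phi (th i j) (blk (w1 + w2) i j) else 0)
     <= \sum_(i < n) \sum_(j < n | (i < j)%N)
              (if A i j then phi (th i j) (blk w1 i j) else 0)
      + \sum_(i < n) \sum_(j < n | (i < j)%N)
              (if A i j then phi (th i j) (blk w2 i j) else 0).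
    rewrite -big_split; apply: ler_sum => i _; rewrite -big_split.
    apply: ler_sum => j _. case: (A i j).
    by rewrite blkD; apply: phiD.
    by apply: addr_ge0.
  have h1 := ler_wpM2l (ltW hl1) hX; have h2 := ler_wpM2l (ltW hl2) hY.
  apply: le_trans (lerD h1 h2) _; rewrite !mulrDr.
  by rewrite addrACA.
- move=> s w s0; rewrite /Pf mulrDr.
  apply: lerD; rewrite mulrCA; apply: ler_wpM2l; try exact: ltW;
    rewrite mulr_sumr; apply: ler_sum => i _;
    rewrite mulr_sumr; apply: ler_sum => j _.
    by rewrite ffunE (_ : s *: w (inl (i, j)) = s * w (inl (i, j))) // psiZ ?lexx //; apply: ltW.
  case: (A i j); last by rewrite mulr0.
  by rewrite blkZ phiZ ?lexx //; apply: ltW.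
Qed.

Lemma TfD a b : Tf (a + b) = Tf a + Tf b.
Proof. by apply/ffunP => -[[i k]|[[i j] k]]; rewrite !ffunE !mxE //; ring. Qed.

Lemma TfZ (s : R) a : Tf (s *: a) = s *: Tf a.
Proof.
apply/ffunP => -[[i k]|[[i j] k]]; rewrite !ffunE !mxE //.
by rewrite /GRing.scale /= mulrBr.
Qed.

Lemma lfD a b : lf (a + b) = lf a + lf b.
Proof.
rewrite /lf -opprD -big_split; congr (- _); apply: eq_bigr => i _.
by rewrite -big_split; apply: eq_bigr => k _; rewrite mxE mulrDr.
Qed.

Lemma lfZ (s : R) a : lf (s *: a) = s * lf a.
Proof.
rewrite /lf mulrN mulr_sumr; congr (- _); apply: eq_bigr => i _.
by rewrite mulr_sumr; apply: eq_bigr => k _; rewrite mxE mulrCA.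
Qed.

Lemma blkT d i j : blk (Tf d) i j = row i d - row j d.
Proof. by apply/rowP => k; rewrite !mxE ffunE. Qed.

Lemma Hdom d : lf d <= Pf (Tf d).
Proof.
have := pp_ge0 d; rewrite /pp /lf /Pf.
have -> : \sum_(i < n) \sum_(k < p) psi (mu i 0 k) (Tf d (inl (i, k)))
        = \sum_(i < n) \sum_(k < p) psi (mu i 0 k) (d i k).
  by apply: eq_bigr => i _; apply: eq_bigr => k _; rewrite ffunE.
have -> : \sum_(i < n) \sum_(j < n | (i < j)%N)
       (if A i j then phi (th i j) (blk (Tf d) i j) else 0)
   = \sum_(i < n) \sum_(j < n | (i < j)%N)
       (if A i j then phi (th i j) (row i d - row j d) else 0).
  by apply: eq_bigr => i _; apply: eq_bigr => j _; rewrite blkT.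
lra.
Qed.

Lemma c_exists : exists c : I -> R,
  (forall w : F, \sum_z c z * w z <= Pf w) /\
  (forall d, \sum_z c z * Tf d z = lf d).
Proof. exact: HB_ext Pf_sublin TfD TfZ lfD lfZ Hdom. Qed.

Definition cr (c : I -> R) (i j : 'I_n) : 'rV[R]_p := \row_k c (inr (i, j, k)).

Lemma X1 (c : I -> R) : (forall w : F, \sum_z c z * w z <= Pf w) ->
  forall i0 k0 b, c (inl (i0, k0)) * b <= lam1 * psi (mu i0 0 k0) b.
Proof.
move=> Hc i0 k0 b.
pose e1 : F := [ffun z => match z with
   | inl ik => if ik == (i0, k0) then b else 0 | inr _ => 0 end].
have := Hc e1.
have -> : \sum_z c z * e1 z = c (inl (i0, k0)) * b.
  rewrite big_sumType /= [X in _ + X]big1 ?addr0; last by move=> q _; rewrite ffunE mulr0.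
  rewrite (@sum_single _ _ _ (i0, k0)) /= ?ffunE ?eqxx //.
  by move=> j _ hj; rewrite ffunE (negbTE hj) mulr0.
have -> : Pf e1 = lam1 * psi (mu i0 0 k0) b.
  rewrite /Pf [X in _ + lam2 * X]big1 ?mulr0 ?addr0; last first.
    move=> i _; apply: big1 => j _.
    have -> : blk e1 i j = 0 by apply/rowP => k; rewrite !mxE ffunE.
    by rewrite phi0; case: ifP.
  rewrite (@sum_pair_single _ _ _ _ i0 k0) ?ffunE ?eqxx //.
  by move=> i k hik; rewrite ffunE (negbTE hik) psi0.
done.
Qed.

Lemma X2 (c : I -> R) : (forall w : F, \sum_z c z * w z <= Pf w) ->
  forall i0 j0 (b : 'rV[R]_p),
  dotv (cr c i0 j0) b <= lam2 * (if (i0 < j0)%N && A i0 j0 then phi (th i0 j0) b else 0).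
Proof.
move=> Hc i0 j0 b.
pose e2 : F := [ffun z => match z with
   | inl _ => 0 | inr ijk => if ijk.1 == (i0, j0) then b 0 ijk.2 else 0 end].
have := Hc e2.
have -> : \sum_z c z * e2 z = dotv (cr c i0 j0) b.
  rewrite big_sumType /= big1 ?add0r; last by move=> q _; rewrite ffunE mulr0.
  rewrite sum_pairE (@sum_single _ _ _ (i0, j0)) /=; last first.
    by move=> ij _ hij; apply: big1 => k _; rewrite ffunE /= (negbTE hij) mulr0.
  by apply: eq_bigr => k _; rewrite ffunE /= eqxx mxE.
have -> : Pf e2 = lam2 * (if (i0 < j0)%N && A i0 j0 then phi (th i0 j0) b else 0).
  rewrite /Pf [X in lam1 * X]big1 ?mulr0 ?add0r; last first.
    by move=> i _; apply: big1 => k _; rewrite ffunE psi0.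
  have hb : forall i j, blk e2 i j = if (i, j) == (i0, j0) then b else 0.
    move=> i j; apply/rowP => k; rewrite !mxE ffunE /=.
    by case: ifP => _; rewrite ?mxE.
  rewrite (@sum_pair_single_dep _ _ _ (fun i j : 'I_n => (i < j)%N) _ i0 j0); last first.
    by move=> i j _ hij; rewrite hb (negbTE hij) phi0; case: ifP.
  by rewrite hb eqxx; case: (i0 < j0)%N; case: (A i0 j0).
done.
Qed.

Lemma X3 (c : I -> R) : (forall d, \sum_z c z * Tf d z = lf d) ->
  forall i0 k0, c (inl (i0, k0)) + \sum_j c (inr (i0, j, k0))
                 - \sum_j c (inr (j, i0, k0)) = - (mu i0 0 k0 - x i0 0 k0).
Proof.
move=> Hc i0 k0.
have := Hc (delta_mx i0 k0).
have -> : lf (delta_mx i0 k0) = - (mu i0 0 k0 - x i0 0 k0).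
  rewrite /lf (@sum_pair_single _ _ _ _ i0 k0) ?mxE ?eqxx ?mulr1 //.
  move=> i k hik; rewrite mxE.
  have -> : ((i == i0) && (k == k0)) = false by rewrite -xpair_eqE (negbTE hik).
  by rewrite mulr0.
move=> <-; apply/esym; rewrite big_sumType /=.
rewrite sum_pairE (@sum_pair_single _ _ _ _ i0 k0) ?ffunE ?mxE ?eqxx ?mulr1 /=; last first.
  move=> i k hik; rewrite ffunE mxE /=.
  have -> : ((i == i0) && (k == k0)) = false by rewrite -xpair_eqE (negbTE hik).
  by rewrite mulr0.
rewrite -addrA; congr (_ + _).
rewrite sum_pairE sum_pairE.
have -> : \sum_i \sum_j \sum_k c (inr (i, j, k)) * Tf (delta_mx i0 k0) (inr (i, j, k))
   = \sum_i \sum_j (c (inr (i, j, k0)) * (i == i0)%:R - c (inr (i, j, k0)) * (j == i0)%:R).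
  apply: eq_bigr => i _; apply: eq_bigr => j _.
  rewrite (@sum_single _ _ _ k0) /= ?ffunE /= ?mxE ?eqxx ?andbT ?mulrBr //.
  by move=> k _ hk; rewrite ffunE /= !mxE (negbTE hk) !andbF subrr mulr0.
rewrite (eq_bigr (fun i => \sum_j c (inr (i, j, k0)) * (i == i0)%:R
                          - \sum_j c (inr (i, j, k0)) * (j == i0)%:R)); last first.
  by move=> i _; rewrite sumrB.
rewrite sumrB; congr (_ - _).
  rewrite (@sum_single _ _ _ i0) /=; last first.
    by move=> i _ hi; apply: big1 => j _; rewrite (negbTE hi) mulr0.
  by apply: eq_bigr => j _; rewrite eqxx mulr1.
apply: eq_bigr => i _; rewrite (@sum_single _ _ _ i0) /= ?eqxx ?mulr1 //.
by move=> j _ hj; rewrite (negbTE hj) mulr0.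
Qed.

Lemma dotvZl (a b : 'rV[R]_p) (s : R) : dotv (s *: a) b = s * dotv a b.
Proof. by rewrite dotvC dotvZr dotvC. Qed.

Lemma kkt_main : KKT_point x lam1 lam2 tau mu th.
Proof.
have [c [Hc1 Hc2]] := c_exists.
have H1 := X1 Hc1; have H2 := X2 Hc1; have H3 := X3 Hc2.
have Z : forall i j : 'I_n, ~~ ((i < j)%N && A i j) -> cr c i j = 0.
  move=> i j hn; have := H2 i j (cr c i j); rewrite (negbTE hn) mulr0 dotv_self => h.
  apply/eqP; rewrite -l2norm_eq0; have := l2norm_ge0 (cr c i j).
  move=> h0; apply/eqP; nra.
have Zc : forall (i j : 'I_n) (k : 'I_p), ~~ ((i < j)%N && A i j) -> c (inr (i, j, k)) = 0.
  by move=> i j k /Z /rowP /(_ k); rewrite !mxE.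
split; first exact: hfeas.
exists (fun i j => - cr c i j); split.
- move=> i; exists (\row_k (c (inl (i, k)) / lam1)); split.
  + move=> b; rewrite /l1norm /dotv -big_split /=; apply: ler_sum => k _.
    rewrite !mxE.
    have g1 : forall y, c (inl (i, k)) / lam1 * y <= psi (mu i 0 k) y.
      by move=> y; rewrite mulrAC ler_pdivrMr // [psi _ _ * _]mulrC; apply: H1.
    have := g1 (b 0 k); have := g1 (- mu i 0 k); rewrite psi_N.
    have := psi_le (mu i 0 k) (b 0 k); nra.
  + apply/rowP => k; rewrite !mxE !summxE.
    have e1 : \sum_(j < n | (i < j)%N) (- cr c i j) 0 k = - \sum_j c (inr (i, j, k)).
      rewrite big_mkcond /= -sumrN; apply: eq_bigr => j _; rewrite mxE mxE.
      by case: ifP => // hij; rewrite Zc ?oppr0 // hij.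
    have e2 : \sum_(j < n | (j < i)%N) (- cr c j i) 0 k = - \sum_j c (inr (j, i, k)).
      rewrite big_mkcond /= -sumrN; apply: eq_bigr => j _; rewrite mxE mxE.
      by case: ifP => // hij; rewrite Zc ?oppr0 // hij.
    rewrite e1 e2 mulrCA mulfV ?gt_eqF // mulr1.
    have := H3 i k; lra.
- move=> i j hij; case hA : (A i j).
  + exists (lam2^-1 *: cr c i j); split; last first.
      by rewrite scalerA mulfV ?gt_eqF // scale1r addrN.
    left; split; first exact: hA.
    move=> b.
    have g2 : forall y, dotv (lam2^-1 *: cr c i j) y <= phi (th i j) y.
      move=> y; rewrite dotvZl mulrC ler_pdivrMr // mulrC.
      by have := H2 i j y; rewrite hij hA.
    rewrite dotvDr.
    have := g2 b; have := g2 (- th i j); rewrite phi_N.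
    have := phi_le (th i j) b; lra.
  + exists 0; split; last by rewrite scaler0 add0r Z ?oppr0 // hA andbF.
    right; move: hA; rewrite /A => /negbT; rewrite -leNgt le_eqVlt => /orP[/eqP e|h].
      by right; split; [rewrite e | left].
    by left; split.
Qed.
End KKT.

Lemma kkt_of_min (R : realType) (n p : nat) (x : 'I_n -> 'rV[R]_p)
  (lam1 lam2 tau : R) (hl1 : 0 < lam1) (hl2 : 0 < lam2) mu th :
  feasible mu th ->
  (forall mu' th', feasible mu' th' ->
     surrS x lam1 lam2 tau th mu th <= surrS x lam1 lam2 tau th mu' th') ->
  KKT_point x lam1 lam2 tau mu th.
Proof. by move=> hf ho; apply: kkt_main. Qed.

Theorem theorem2p1 (R : realType) (n p : nat) (x : 'I_n -> 'rV[R]_p)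
  (lam1 lam2 tau : R) (hl1 : 0 < lam1) (hl2 : 0 < lam2) (htau : 0 < tau)
  (mu : nat -> 'I_n -> 'rV[R]_p) (th : nat -> 'I_n -> 'I_n -> 'rV[R]_p)
  (Hmu0 : forall i, mu 0%N i = x i)
  (Hth0 : forall i j : 'I_n, (i < j)%N -> th 0%N i j = x i - x j)
  (Hstep : forall m : nat,
     feasible (mu m.+1) (th m.+1) /\
     (forall mu' th', feasible mu' th' ->
        surrS x lam1 lam2 tau (th m) (mu m.+1) (th m.+1)
        <= surrS x lam1 lam2 tau (th m) mu' th')) :
  exists mstar : nat,
    (forall m : nat, (mstar <= m)%N ->
       objS x lam1 lam2 tau (mu m) (th m) = objS x lam1 lam2 tau (mu mstar) (th mstar))
    /\ KKT_point x lam1 lam2 tau (mu mstar) (th mstar).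
Proof.
have feas : forall m, feasible (mu m) (th m).
  by case=> [|m]; [move=> i j hij; rewrite Hth0 // !Hmu0 | exact: (Hstep m).1].
have l2ge : 0 <= lam2 by apply: ltW.
pose S m := objS x lam1 lam2 tau (mu m) (th m).
pose V m := surrS x lam1 lam2 tau (th m) (mu m.+1) (th m.+1).
have hSV : forall m, S m.+1 <= V m by move=> m; apply: (surr_major x lam1 tau l2ge).
have hVS : forall m, V m <= S m.
  by move=> m; rewrite /S -(surr_self x lam1 lam2 tau (mu m) (th m)); apply: (Hstep m).2.
pose a m := [set ij : 'I_n * 'I_n | l2norm (th m ij.1 ij.2) < tau].
have Va : forall m k, a m = a k -> V m = V k.
  have H1 : forall m k, a m = a k -> V m <= V k.
    move=> m k e.
    have hd : forall i j : 'I_n, (i < j)%N ->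
        (l2norm (th m i j) < tau) = (l2norm (th k i j) < tau).
      by move=> i j _; move/setP: e => /(_ (i, j)); rewrite !inE.
    rewrite /V -(surr_dep x lam1 lam2 (mu k.+1) (th k.+1) hd).
    by apply: (Hstep m).2; apply: (Hstep k).1.
  by move=> m k e; apply/eqP; rewrite eq_le !H1.
have Vdec : forall m, V m.+1 <= V m by move=> m; apply: le_trans (hSV m).
have [m0 Hm0] := ev_const Vdec Va.
have SV : forall m, (m0 < m)%N -> S m = V m0.
  case=> // m hm; apply/eqP; rewrite eq_le.
  rewrite -{1}(Hm0 m) // hSV /=.
  by rewrite -(Hm0 m.+1) ?hVS // ltnW.
exists m0.+1; split.
  by move=> m hm; rewrite -/(S m) -/(S m0.+1) !SV.
apply: kkt_of_min => // mu' th' hf.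
rewrite surr_self -/(S m0.+1) SV // -(Hm0 m0.+1) //.
exact: (Hstep m0.+1).2.
Qed.
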